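(* Let $p,q$ be positive integers with $\gcd(p,q)=1$, $q$ odd and $2p/q-1\in(-1,1)$. Then \[ \mathcal{O}(2p/q)=\{(-1)^sA\big((4\ell+2p-2s-q)^2/q^2\big):\ s\in\{0,1\},\ \ell\in\mathbb{Z},\ s-p+1\le2\ell\le s-p+q-1\} \] and \[ \mathcal{E}(2p/q)=\{(-1)^sA\big((4\ell-2s-q)^2/q^2\big):\ s\in\{0,1\},\ \ell\in\mathbb{Z},\ s+1\le2\ell\le s+q-1\}. \]
   Context: Nodes: $x_{k,n}:=2k/n-1$, $k=0,\dots,n$; $D_n(x)=\sum_{k=0}^n(-1)^k\frac{1}{x-x_{k,n}}$. $A(y)=\sum_{k=0}^\infty(-1)^k\frac{4k+2}{(2k+1)^2-y}$ for $y\in[0,1)$. A sequence $n_j$ is a strictly increasing map $\mathbb{N}\to\mathbb{N}$, odd (even) if all $n_j$ are odd (even); $x$ is regular for $n_j$ if there is $j_0$ with $x\notin\{x_{0,n_j},\dots,x_{n_j,n_j}\}$ for $j\ge j_0$. For a rational $r$ with $x=r-1\in(-1,1)$, $\mathcal{O}(r)$ is the set of $L\in\overline{\mathbb{R}}=\mathbb{R}\cup\{\pm\infty\}$ such that $\lim_{j\to\infty}D_{n_j}(x)/n_j=L$ for some odd sequence $n_j$ for which $x$ is regular; $\mathcal{E}(r)$ is defined likewise with even sequences. *)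

(* Defs.v *)
From Stdlib Require Import Reals ZArith Arith.
From Coquelicot Require Import Coquelicot.
Open Scope R_scope.

Definition node (k n : nat) : R := 2 * INR k / INR n - 1.

Definition Dn (n : nat) (x : R) : R :=
  sum_n (fun k => (-1) ^ k / (x - node k n)) n.

Definition A (y : R) : R :=
  Series (fun k => (-1) ^ k * (4 * INR k + 2) / ((2 * INR k + 1) ^ 2 - y)).

Definition strict_incr (nj : nat -> nat) : Prop :=
  forall i j, (i < j)%nat -> (nj i < nj j)%nat.

Definition regular (x : R) (nj : nat -> nat) : Prop :=
  exists j0 : nat, forall j, (j0 <= j)%nat ->
    forall k, (k <= nj j)%nat -> x <> node k (nj j).

Definition Oset (r : R) (L : Rbar) : Prop :=
  exists nj : nat -> nat, strict_incr nj /\ (forall j, Nat.odd (nj j) = true) /\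
    regular (r - 1) nj /\
    is_lim_seq (fun j => Dn (nj j) (r - 1) / INR (nj j)) L.

Definition Eset (r : R) (L : Rbar) : Prop :=
  exists nj : nat -> nat, strict_incr nj /\ (forall j, Nat.even (nj j) = true) /\
    regular (r - 1) nj /\
    is_lim_seq (fun j => Dn (nj j) (r - 1) / INR (nj j)) L.

(* Main.v *)
Require Import Defs.
From Stdlib Require Import Reals ZArith Arith Lia Lra Classical IndefiniteDescription.
From Coquelicot Require Import Coquelicot.
Open Scope R_scope.

Lemma m1_2k (k : nat) : (-1) ^ (2 * k) = 1.
Proof. rewrite pow_mult. replace ((-1)^2) with 1 by ring. apply pow1. Qed.

Lemma m1_sq (k : nat) : (-1) ^ k * (-1) ^ k = 1.
Proof. rewrite <- pow_add. replace (k+k)%nat with (2*k)%nat by lia. apply m1_2k. Qed.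

Lemma pow_m1_diff (m s : nat) (k : Z) :
  Z.of_nat m = (Z.of_nat s + 2 * k)%Z -> (-1) ^ m = (-1) ^ s.
Proof.
  intros H. destruct (le_lt_dec s m) as [h|h].
  - replace m with (s + 2 * Z.to_nat k)%nat by lia.
    rewrite pow_add, m1_2k; ring.
  - replace s with (m + 2 * Z.to_nat (- k))%nat by lia.
    rewrite pow_add, m1_2k; ring.
Qed.

Definition Sv (v : R) (N : nat) : R :=
  sum_f_R0 (fun i => (-1) ^ i * / (2 * INR i + 1 + v)) N.

Lemma Sv_cv (v : R) : -1 < v -> exists l, Un_cv (Sv v) l.
Proof.
  intros Hv.
  assert (pos : forall i, 0 < 2 * INR i + 1 + v).
  { intros i; pose proof (pos_INR i); lra. }
  destruct (alternated_series (fun i => / (2 * INR i + 1 + v))) as [l Hl].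
  - intros n. apply Rinv_le_contravar. apply pos. rewrite S_INR. lra.
  - intros eps Heps.
    destruct (archimed (/ eps)) as [H1 _].
    assert (0 <= IZR (up (/ eps))).
    { pose proof (Rinv_0_lt_compat eps Heps). lra. }
    exists (Z.to_nat (up (/ eps))). intros n Hn. unfold R_dist.
    rewrite Rminus_0_r, Rabs_pos_eq.
    2: { left; apply Rinv_0_lt_compat, pos. }
    apply le_INR in Hn. rewrite INR_IZR_INZ, Z2Nat.id in Hn.
    2: { apply le_IZR; lra. }
    rewrite <- (Rinv_inv eps). apply Rinv_lt_contravar.
    + apply Rmult_lt_0_compat. apply Rinv_0_lt_compat; lra. apply pos.
    + pose proof (pos_INR n). lra.
  - exists l. exact Hl.
Qed.

Lemma A_eq (u l1 l2 : R) : -1 < u < 1 -> Un_cv (Sv (- u)) l1 -> Un_cv (Sv u) l2 ->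
  A (u ^ 2) = l1 + l2.
Proof.
  intros Hu H1 H2. unfold A. apply is_series_unique.
  apply is_series_Reals in H1. apply is_series_Reals in H2.
  pose proof (is_series_plus _ _ _ _ H1 H2) as H.
  refine (is_series_ext _ _ _ _ H).
  intros n. unfold plus; simpl.
  assert (0 < 2 * INR n + 1 + u) by (pose proof (pos_INR n); lra).
  assert (0 < 2 * INR n + 1 + - u) by (pose proof (pos_INR n); lra).
  assert ((2 * INR n + 1) ^ 2 - u ^ 2 <> 0).
  { replace ((2 * INR n + 1) ^ 2 - u ^ 2) with ((2 * INR n + 1 + u) * (2 * INR n + 1 + - u)) by ring.
    apply Rmult_integral_contrapositive; split; lra. }
  field. split; lra.
Qed.

Lemma lim_main (u : R) (s : nat) (a b : nat -> nat) : -1 < u < 1 ->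
  (forall N, exists J, forall j, (J <= j)%nat -> (N <= a j)%nat /\ (N <= b j)%nat) ->
  is_lim_seq (fun j => (-1) ^ s * (Sv (- u) (a j) + Sv u (b j))) ((-1) ^ s * A (u ^ 2)).
Proof.
  intros Hu Hab.
  destruct (Sv_cv (- u)) as [l1 H1]; [lra|].
  destruct (Sv_cv u) as [l2 H2]; [lra|].
  rewrite (A_eq u l1 l2 Hu H1 H2).
  apply is_lim_seq_Reals in H1. apply is_lim_seq_Reals in H2.
  apply (is_lim_seq_scal_l _ ((-1) ^ s) (Finite (l1 + l2))).
  apply is_lim_seq_plus'.
  - apply (is_lim_seq_subseq (Sv (- u)) l1 a); [|exact H1].
    intros P [N HN]. destruct (Hab N) as [J HJ]. exists J. intros j Hj. apply HN, HJ, Hj.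
  - apply (is_lim_seq_subseq (Sv u) l2 b); [|exact H2].
    intros P [N HN]. destruct (Hab N) as [J HJ]. exists J. intros j Hj. apply HN, HJ, Hj.
Qed.

Lemma sum_rev (f : nat -> R) (m : nat) :
  sum_f_R0 f m = sum_f_R0 (fun i => f (m - i)%nat) m.
Proof.
  revert f. induction m as [|m IH]; intros f.
  - simpl. reflexivity.
  - rewrite (decomp_sum (fun i => f (S m - i)%nat)) by lia. simpl pred.
    simpl sum_f_R0 at 1. rewrite IH.
    replace (S m - 0)%nat with (S m) by lia.
    rewrite Rplus_comm. f_equal.
Qed.

Lemma Dn_id (p q n m r : nat) : (0 < q)%nat -> (p * n = m * q + r)%nat -> (0 < r < q)%nat ->
  (m < n)%nat ->
  Dn n (2 * INR p / INR q - 1) / INR n =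
  (-1) ^ m * (Sv (- ((INR q - 2 * INR r) / INR q)) m + Sv ((INR q - 2 * INR r) / INR q) (n - m - 1)).
Proof.
  intros Hq Heq Hr Hmn.
  assert (Hqr : INR q <> 0) by (apply not_0_INR; lia).
  assert (Hnr : INR n <> 0) by (apply not_0_INR; lia).
  assert (HP : INR p = (INR m * INR q + INR r) / INR n).
  { apply (f_equal INR) in Heq. rewrite plus_INR, !mult_INR in Heq.
    field_simplify_eq; [|exact Hnr]. rewrite <- Heq. ring. }
  unfold Dn. rewrite sum_n_Reals. rewrite (tech2 _ m n Hmn).
  rewrite sum_rev. replace (n - S m)%nat with (n - m - 1)%nat by lia.
  unfold Sv. rewrite Rmult_plus_distr_l, !scal_sum.
  unfold Rdiv at 1. rewrite Rmult_plus_distr_r. idtac.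
  rewrite !(Rmult_comm _ (/ INR n)), !scal_sum. f_equal.
  - apply sum_eq. intros i Hi.
    assert (Hs : (-1) ^ (m - i) = (-1) ^ m * (-1) ^ i).
    { replace m with ((m - i) + i)%nat at 2 by lia. rewrite pow_add, Rmult_assoc, m1_sq. ring. }
    unfold node. rewrite Hs, minus_INR by exact Hi.
    assert (Hd1 : 2 * INR p / INR q - 1 - (2 * (INR m - INR i) / INR n - 1)
                  = 2 * (INR i * INR q + INR r) / (INR q * INR n)).
    { rewrite HP. field. split; assumption. }
    assert (Hd2 : 2 * INR i + 1 + - ((INR q - 2 * INR r) / INR q)
                  = 2 * (INR i * INR q + INR r) / INR q).
    { field. exact Hqr. }
    assert (Hpos : INR i * INR q + INR r <> 0).
    { assert (0 < INR r) by (apply lt_0_INR; lia).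
      pose proof (pos_INR i); pose proof (pos_INR q). nra. }
    rewrite Hd1, Hd2. field. repeat split; assumption.
  - apply sum_eq. intros i Hi.
    assert (Hs : (-1) ^ (S m + i) = - ((-1) ^ m * (-1) ^ i)).
    { rewrite pow_add. simpl. ring. }
    rewrite Hs.
    assert (Hd1 : 2 * INR p / INR q - 1 - (2 * (INR m + 1 + INR i) / INR n - 1)
                  = - (2 * ((INR i + 1) * INR q - INR r) / (INR q * INR n))).
    { rewrite HP. field. split; assumption. }
    assert (Hd2 : 2 * INR i + 1 + (INR q - 2 * INR r) / INR q
                  = 2 * ((INR i + 1) * INR q - INR r) / INR q).
    { field. exact Hqr. }
    assert (Hpos : (INR i + 1) * INR q - INR r <> 0).
    { assert (INR r < INR q) by (apply lt_INR; lia).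
      pose proof (pos_INR i); pose proof (pos_INR q). nra. }
    unfold node. rewrite plus_INR, S_INR, Hd1, Hd2. field. repeat split; assumption.
Qed.

Lemma class_lim (p q r s : nat) (nn mm : nat -> nat) :
  (0 < p)%nat -> (p < q)%nat -> (forall j, j <= nn j)%nat -> (0 < r < q)%nat ->
  (forall j, p * nn j = mm j * q + r)%nat -> (forall j, (-1) ^ (mm j) = (-1) ^ s) ->
  is_lim_seq (fun j => Dn (nn j) (2 * INR p / INR q - 1) / INR (nn j))
    ((-1) ^ s * A (((INR q - 2 * INR r) / INR q) ^ 2)).
Proof.
  intros Hp Hpq Hnn Hr Heq Hs.
  assert (Hmn : forall j, (mm j < nn j)%nat).
  { intros j. specialize (Heq j). nia. }
  apply is_lim_seq_ext with
    (fun j => (-1) ^ s * (Sv (- ((INR q - 2 * INR r) / INR q)) (mm j)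
                         + Sv ((INR q - 2 * INR r) / INR q) (nn j - mm j - 1))).
  - intros j. rewrite (Dn_id p q (nn j) (mm j) r); [rewrite Hs; reflexivity|lia|apply Heq|lia|apply Hmn].
  - apply lim_main.
    + assert (0 < INR q) by (apply lt_0_INR; lia).
      assert (0 < INR r) by (apply lt_0_INR; lia).
      assert (INR r < INR q) by (apply lt_INR; lia).
      split.
      * apply Rmult_lt_reg_r with (INR q); [lra|]. unfold Rdiv. rewrite Rmult_assoc, Rinv_l by lra. lra.
      * apply Rmult_lt_reg_r with (INR q); [lra|]. unfold Rdiv. rewrite Rmult_assoc, Rinv_l by lra. lra.
    + intros N. exists (q * (N + 2))%nat. intros j Hj.
      specialize (Hnn j). specialize (Heq j).
      assert (HN : (q * (N + 2) <= nn j)%nat) by lia.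
      split.
      * nia.
      * assert (mm j + N + 1 <= nn j)%nat by nia. lia.
Qed.

Lemma node_eq (k n p q : nat) : (0 < n)%nat -> (0 < q)%nat ->
  node k n = 2 * INR p / INR q - 1 -> (k * q = p * n)%nat.
Proof.
  intros Hn Hq H. unfold node in H.
  assert (Hqr : INR q <> 0) by (apply not_0_INR; lia).
  assert (Hnr : INR n <> 0) by (apply not_0_INR; lia).
  assert (H2 : 2 * INR k / INR n = 2 * INR p / INR q) by lra.
  field_simplify_eq in H2; try (split; assumption).
  apply INR_eq. rewrite !mult_INR. nra.
Qed.

Lemma node_eq_conv (k n p q : nat) : (0 < n)%nat -> (0 < q)%nat ->
  (k * q = p * n)%nat -> node k n = 2 * INR p / INR q - 1.
Proof.
  intros Hn Hq H. unfold node.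
  assert (Hqr : INR q <> 0) by (apply not_0_INR; lia).
  assert (Hnr : INR n <> 0) by (apply not_0_INR; lia).
  apply (f_equal INR) in H. rewrite !mult_INR in H.
  field_simplify_eq; [|split; assumption]. lra.
Qed.

Lemma pigeon (K : nat) : forall f : nat -> nat, (forall j, (f j < K)%nat) ->
  exists c, forall N, exists j, (N <= j)%nat /\ f j = c.
Proof.
  induction K as [|K IH]; intros f Hf.
  - specialize (Hf 0%nat). lia.
  - destruct (classic (forall N, exists j, (N <= j)%nat /\ f j = K)) as [H|H].
    + exists K. exact H.
    + apply not_all_ex_not in H. destruct H as [N HN].
      assert (HN' : forall j, (N <= j)%nat -> f j <> K).
      { intros j Hj E. apply HN. exists j. split; assumption. }
      destruct (IH (fun j => f (j + N)%nat)) as [c Hc].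
      { intros j. specialize (Hf (j + N)%nat). specialize (HN' (j + N)%nat). lia. }
      exists c. intros M. destruct (Hc M) as [j [Hj1 Hj2]]. exists (j + N)%nat. split; [lia|exact Hj2].
Qed.

Lemma val_eq (q r : nat) (w : R) : INR q <> 0 -> w = 2 * INR r - INR q ->
  A (((INR q - 2 * INR r) / INR q) ^ 2) = A (w ^ 2 / INR q ^ 2).
Proof. intros Hq Hw. f_equal. subst w. field. exact Hq. Qed.

Lemma sign_bit (m : nat) : (-1) ^ m = (-1) ^ (if Nat.even m then 0 else 1)%nat.
Proof.
  destruct (Nat.even m) eqn:E.
  - apply Nat.even_spec in E. destruct E as [a ->]. rewrite m1_2k. reflexivity.
  - assert (O : Nat.odd m = true) by (rewrite <- Nat.negb_even, E; reflexivity).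
    apply Nat.odd_spec in O. destruct O as [a ->]. rewrite pow_add, m1_2k. ring.
Qed.

Lemma incr_ge (nj : nat -> nat) : strict_incr nj -> forall j, (j <= nj j)%nat.
Proof.
  intros H. induction j as [|j IH]; [lia|]. specialize (H j (S j) ltac:(lia)). lia.
Qed.

Lemma mk_seq (p q n0 M t s : nat) : (0 < p)%nat -> (p < q)%nat -> (0 < t < q)%nat ->
  (p * n0 = M * q + t)%nat -> (-1) ^ M = (-1) ^ s ->
  strict_incr (fun j => n0 + 2 * q * j)%nat /\
  (forall j, Nat.odd (n0 + 2 * q * j) = Nat.odd n0) /\
  regular (2 * INR p / INR q - 1) (fun j => n0 + 2 * q * j)%nat /\
  is_lim_seq (fun j => Dn (n0 + 2 * q * j) (2 * INR p / INR q - 1) / INR (n0 + 2 * q * j))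
    ((-1) ^ s * A (((INR q - 2 * INR t) / INR q) ^ 2)).
Proof.
  intros Hp Hpq Ht Heq Hs.
  assert (Hn0 : (0 < n0)%nat) by (destruct n0; lia).
  split; [|split; [|split]].
  - intros i j Hij. nia.
  - intros j. replace (n0 + 2 * q * j)%nat with (n0 + 2 * (q * j))%nat by lia.
    apply Nat.odd_add_mul_2.
  - exists 0%nat. intros j _ k Hk E. symmetry in E.
    apply node_eq in E; [|lia|lia].
    assert (E2 : (k * q = (M + 2 * p * j) * q + t)%nat) by nia.
    destruct (le_lt_dec k (M + 2 * p * j)) as [h|h]; nia.
  - apply (class_lim p q t s (fun j => n0 + 2 * q * j)%nat (fun j => M + 2 * p * j)%nat); try assumption.
    + intros j. nia.
    + intros j. nia.
    + intros j. replace (M + 2 * p * j)%nat with (M + 2 * (p * j))%nat by lia.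
      rewrite pow_add, m1_2k, Rmult_1_r. exact Hs.
Qed.

Lemma realize (p q t : nat) (b : bool) : (0 < p)%nat -> Nat.gcd p q = 1%nat -> Nat.odd q = true ->
  exists n0 M, Nat.odd n0 = b /\ (p * n0 = M * q + t)%nat.
Proof.
  intros Hp Hg Hq. destruct (Nat.gcd_bezout_pos p q Hp) as [a [c Hac]]. rewrite Hg in Hac.
  destruct (Bool.bool_dec (Nat.odd (a * t)) b) as [E|E].
  - exists (a * t)%nat, (c * t)%nat. split; [exact E|]. nia.
  - exists (a * t + q)%nat, (c * t + p)%nat. split.
    + rewrite Nat.odd_add, Hq. destruct (Nat.odd (a * t)), b; simpl; congruence.
    + nia.
Qed.

Lemma extract (p q : nat) (nj : nat -> nat) (L : Rbar) : (0 < p)%nat -> (p < q)%nat ->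
  strict_incr nj -> regular (2 * INR p / INR q - 1) nj ->
  is_lim_seq (fun j => Dn (nj j) (2 * INR p / INR q - 1) / INR (nj j)) L ->
  exists j m r, (0 < r < q)%nat /\ (p * nj j = m * q + r)%nat /\
    L = Finite ((-1) ^ m * A (((INR q - 2 * INR r) / INR q) ^ 2)).
Proof.
  intros Hp Hpq Hinc [j0 Hreg] Hlim.
  pose proof (incr_ge nj Hinc) as Hge.
  set (J := S j0).
  assert (Hnz : forall j, (J <= j)%nat -> (p * nj j) mod q <> 0%nat).
  { intros j Hj E. pose proof (Nat.div_mod_eq (p * nj j)%nat q) as D. rewrite E in D.
    specialize (Hge j).
    assert (Hj0 : (j0 <= j)%nat) by (unfold J in Hj; lia).
    apply (Hreg j Hj0 ((p * nj j) / q)%nat).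
    - nia.
    - symmetry. apply node_eq_conv; [lia|lia|]. lia. }
  set (bit := fun m : nat => if Nat.even m then 0%nat else 1%nat).
  assert (Hbit : forall m, (bit m <= 1)%nat) by (intros m; unfold bit; destruct (Nat.even m); lia).
  set (f := fun j => (2 * ((p * nj (j + J)) mod q) + bit ((p * nj (j + J)) / q))%nat).
  destruct (pigeon (2 * q) f) as [c Hc].
  { intros j. unfold f. pose proof (Nat.mod_upper_bound (p * nj (j + J))%nat q ltac:(lia)).
    specialize (Hbit ((p * nj (j + J)) / q)%nat). lia. }
  destruct (Hc 0%nat) as [j1 [_ Hj1]].
  set (r := ((p * nj (j1 + J)) mod q)%nat).
  set (m1 := ((p * nj (j1 + J)) / q)%nat).
  pose (g := fun N => proj1_sig (constructive_indefinite_description _ (Hc N))).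
  assert (Hg : forall N, (N <= g N)%nat /\ f (g N) = c).
  { intros N. unfold g. destruct (constructive_indefinite_description _ (Hc N)) as [x Hx]. exact Hx. }
  assert (Hcls : forall k : nat, ((p * nj (k + J)) mod q = r /\ bit ((p * nj (k + J)) / q) = bit m1)%nat ->
     (p * nj (k + J) = ((p * nj (k + J)) / q) * q + r)%nat /\
     (-1) ^ ((p * nj (k + J)) / q)%nat = (-1) ^ m1).
  { intros k [E1 E2]. split.
    - pose proof (Nat.div_mod_eq (p * nj (k + J))%nat q). lia.
    - rewrite (sign_bit ((p * nj (k + J)) / q)%nat), (sign_bit m1). fold (bit ((p * nj (k + J)) / q)%nat).
      fold (bit m1). rewrite E2. reflexivity. }
  assert (Hf : forall k : nat, f k = c -> ((p * nj (k + J)) mod q = r /\ bit ((p * nj (k + J)) / q) = bit m1)%nat).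
  { intros k Hk. rewrite <- Hk in Hj1. unfold f in Hj1. unfold r, m1.
    pose proof (Hbit ((p * nj (k + J)) / q)%nat). pose proof (Hbit ((p * nj (j1 + J)) / q)%nat). lia. }
  assert (Hr : (0 < r < q)%nat).
  { split.
    - pose proof (Hnz (j1 + J)%nat ltac:(lia)). unfold r. lia.
    - apply Nat.mod_upper_bound. lia. }
  exists (j1 + J)%nat, m1, r. split; [exact Hr|]. split.
  { pose proof (Nat.div_mod_eq (p * nj (j1 + J))%nat q). unfold m1, r. lia. }
  assert (H1 : is_lim_seq (fun k => Dn (nj (g k + J)%nat) (2 * INR p / INR q - 1) / INR (nj (g k + J)%nat))
                  ((-1) ^ m1 * A (((INR q - 2 * INR r) / INR q) ^ 2))).
  { apply (class_lim p q r m1 (fun k => nj (g k + J)%nat) (fun k => (p * nj (g k + J)) / q)%nat); try assumption.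
    - intros k. specialize (Hge (g k + J)%nat). specialize (Hg k). lia.
    - intros k. apply Hcls, Hf, Hg.
    - intros k. apply Hcls, Hf, Hg. }
  assert (H2 : is_lim_seq (fun k => Dn (nj (g k + J)%nat) (2 * INR p / INR q - 1) / INR (nj (g k + J)%nat)) L).
  { apply (is_lim_seq_subseq (fun j => Dn (nj j) (2 * INR p / INR q - 1) / INR (nj j)) L
             (fun k => g k + J)%nat); [|exact Hlim].
    intros P [N HN]. exists N. intros k Hk. apply HN. specialize (Hg k). lia. }
  apply is_lim_seq_unique in H1. apply is_lim_seq_unique in H2. rewrite <- H2, H1. reflexivity.
Qed.

Lemma div2_wit (m : nat) : exists c s, (s <= 1)%nat /\ m = (2 * c + s)%nat.
Proof.
  exists (m / 2)%nat, (m mod 2)%nat. pose proof (Nat.div_mod_eq m 2). pose proof (Nat.mod_upper_bound m 2). lia.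
Qed.

Lemma IZR_rel (l : Z) (a b c : nat) (k : R) :
  (2 * l = Z.of_nat a - Z.of_nat b + Z.of_nat c)%Z -> 2 * IZR l = INR a - INR b + INR c.
Proof.
  intros H. apply (f_equal IZR) in H. rewrite mult_IZR, plus_IZR, minus_IZR, <- !INR_IZR_INZ in H.
  exact H.
Qed.

Theorem corollary4 (p q : nat) :
  (0 < p)%nat -> (0 < q)%nat -> Nat.gcd p q = 1%nat -> Nat.odd q = true ->
  -1 < 2 * INR p / INR q - 1 < 1 ->
  (forall L : Rbar, Oset (2 * INR p / INR q) L <->
     exists (s : nat) (l : Z), (s <= 1)%nat /\
       (Z.of_nat s - Z.of_nat p + 1 <= 2 * l <= Z.of_nat s - Z.of_nat p + Z.of_nat q - 1)%Z /\
       L = Finite ((-1) ^ s *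
             A ((4 * IZR l + 2 * INR p - 2 * INR s - INR q) ^ 2 / INR q ^ 2))) /\
  (forall L : Rbar, Eset (2 * INR p / INR q) L <->
     exists (s : nat) (l : Z), (s <= 1)%nat /\
       (Z.of_nat s + 1 <= 2 * l <= Z.of_nat s + Z.of_nat q - 1)%Z /\
       L = Finite ((-1) ^ s *
             A ((4 * IZR l - 2 * INR s - INR q) ^ 2 / INR q ^ 2))).
Proof.
  intros Hp Hq Hg Hqodd [Hx1 Hx2].
  assert (Hqr0 : 0 < INR q) by (apply lt_0_INR; lia).
  assert (Hqr : INR q <> 0) by lra.
  assert (Hpq : (p < q)%nat).
  { apply INR_lt. assert (H : 2 * INR p / INR q < 2) by lra.
    apply Rmult_lt_compat_r with (r := INR q / 2) in H; [|lra].
    field_simplify in H; lra. }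
  pose proof Hqodd as Hqo. apply Nat.odd_spec in Hqo. destruct Hqo as [b Hb].
  split; intros L; split.
  - intros [nj [Hinc [Hodd [Hreg Hlim]]]].
    destruct (extract p q nj L Hp Hpq Hinc Hreg Hlim) as [j [m [r [Hr [Heq HL]]]]].
    pose proof (Hodd j) as Ho. apply Nat.odd_spec in Ho. destruct Ho as [a Ha].
    destruct (div2_wit m) as [c [s [Hs Hm]]].
    set (l := (Z.of_nat (p * a) - Z.of_nat (m * b) - Z.of_nat c)%Z).
    assert (Hl : (2 * l = Z.of_nat r - Z.of_nat p + Z.of_nat s)%Z).
    { unfold l. rewrite Ha, Hb in Heq. nia. }
    exists s, l. split; [exact Hs|]. split; [lia|].
    rewrite HL. f_equal. rewrite (pow_m1_diff m s (Z.of_nat c)) by lia. f_equal.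
    apply val_eq; [exact Hqr|]. pose proof (IZR_rel l r p s 0 Hl). lra.
  - intros [s [l [Hs [[Hb1 Hb2] HL]]]].
    set (t := Z.to_nat (2 * l + Z.of_nat p - Z.of_nat s)).
    assert (Ht : Z.of_nat t = (2 * l + Z.of_nat p - Z.of_nat s)%Z) by (unfold t; lia).
    assert (Htq : (0 < t < q)%nat) by lia.
    destruct (realize p q t true Hp Hg Hqodd) as [n0 [M [Hn0 Heq]]].
    pose proof Hn0 as Ho. apply Nat.odd_spec in Ho. destruct Ho as [a Ha].
    assert (HM : (-1) ^ M = (-1) ^ s).
    { apply (pow_m1_diff M s (Z.of_nat (p * a) - Z.of_nat (M * b) - l)).
      rewrite Ha, Hb in Heq. nia. }
    destruct (mk_seq p q n0 M t s Hp Hpq Htq Heq HM) as [H1 [H2 [H3 H4]]].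
    exists (fun j => n0 + 2 * q * j)%nat. split; [exact H1|]. split.
    { intros j. rewrite H2. exact Hn0. }
    split; [exact H3|].
    rewrite HL. erewrite <- val_eq; [exact H4|exact Hqr|].
    assert (Hl : (2 * l = Z.of_nat t - Z.of_nat p + Z.of_nat s)%Z) by lia.
    pose proof (IZR_rel l t p s 0 Hl). lra.
  - intros [nj [Hinc [Hev [Hreg Hlim]]]].
    destruct (extract p q nj L Hp Hpq Hinc Hreg Hlim) as [j [m [r [Hr [Heq HL]]]]].
    pose proof (Hev j) as Ho. apply Nat.even_spec in Ho. destruct Ho as [a Ha].
    destruct (div2_wit m) as [c [s [Hs Hm]]].
    set (l := (Z.of_nat (p * a) - Z.of_nat (m * b) - Z.of_nat c)%Z).
    assert (Hl : (2 * l = Z.of_nat r - Z.of_nat 0 + Z.of_nat s)%Z).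
    { unfold l. rewrite Ha, Hb in Heq. nia. }
    exists s, l. split; [exact Hs|]. split; [lia|].
    rewrite HL. f_equal. rewrite (pow_m1_diff m s (Z.of_nat c)) by lia. f_equal.
    apply val_eq; [exact Hqr|]. pose proof (IZR_rel l r 0 s 0 Hl). simpl INR in *. lra.
  - intros [s [l [Hs [[Hb1 Hb2] HL]]]].
    set (t := Z.to_nat (2 * l - Z.of_nat s)).
    assert (Ht : Z.of_nat t = (2 * l - Z.of_nat s)%Z) by (unfold t; lia).
    assert (Htq : (0 < t < q)%nat) by lia.
    destruct (realize p q t false Hp Hg Hqodd) as [n0 [M [Hn0 Heq]]].
    assert (Hn0e : Nat.even n0 = true) by (rewrite <- Nat.negb_odd, Hn0; reflexivity).
    pose proof Hn0e as Ho. apply Nat.even_spec in Ho. destruct Ho as [a Ha].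
    assert (HM : (-1) ^ M = (-1) ^ s).
    { apply (pow_m1_diff M s (Z.of_nat (p * a) - Z.of_nat (M * b) - l)).
      rewrite Ha, Hb in Heq. nia. }
    destruct (mk_seq p q n0 M t s Hp Hpq Htq Heq HM) as [H1 [H2 [H3 H4]]].
    exists (fun j => n0 + 2 * q * j)%nat. split; [exact H1|]. split.
    { intros j. rewrite <- Nat.negb_odd, H2, Hn0. reflexivity. }
    split; [exact H3|].
    rewrite HL. erewrite <- val_eq; [exact H4|exact Hqr|].
    assert (Hl : (2 * l = Z.of_nat t - Z.of_nat 0 + Z.of_nat s)%Z) by lia.
    pose proof (IZR_rel l t 0 s 0 Hl). simpl INR in *. lra.
Qed.
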